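(* Consider the following two-stage game between Alice (A) and Bob (B). $X_1^A,X_1^B$ are independent and uniform on $\{-1,+1\}$; $X_2=X_1^B$. At stage 1 only Bob acts, choosing $U_1^B\in\{-1,+1\}$ knowing $H_1^B=X_1^B$ (Alice knows $H_1^A=X_1^A$). At stage 2 Alice and Bob act simultaneously, choosing $U_2^A,U_2^B\in\{-1,0,+1\}$, with information $H_2^A=(X_1^A,U_1^B)$ and $H_2^B=(X_1^B,U_1^B)$. Rewards: $R_1^A=-1$ if $U_1^B=-1$ and $0$ otherwise; $R_2^A=1$ if $U_2^A=X_2$ or $U_2^A=0$, and $0$ otherwise; $R_1^B=0.2$ if $U_1^B=-1$ and $0$ otherwise; $R_2^B=-1$ if $U_2^A=U_2^B$ and $0$ otherwise; total payoffs are $R_1^i+R_2^i$. Let $K_1^A=X_1^A$, $K_2^A=U_1^B$, and $K_t^B=H_t^B$ for $t=1,2$. Then the set of expected payoff profiles of weak perfect Bayesian equilibria whose strategy profile is $K$-based (i.e. Alice's stage-2 mixed action depends only on $U_1^B$) is a proper subset of the set of expected payoff profiles of all weak perfect Bayesian equilibria.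
   Context: A behavioral strategy of a player maps each of that player's information realizations to a distribution over actions. An assessment $(g,\mu)$ consists of a behavioral strategy profile $g$ and a belief system $\mu$ assigning to each information set of each player a probability distribution over the nodes (complete histories of moves of nature and players) in that information set. $(g,\mu)$ is a weak perfect Bayesian equilibrium (wPBE) if (i) $g$ is sequentially rational given $\mu$: at every information set of every player, the player's continuation strategy maximizes their expected continuation payoff computed with belief $\mu$ over nodes and the others' strategies $g$; and (ii) at every information set reached with positive probability under $g$, $\mu$ is obtained from $g$ by Bayes' rule (no restriction off the equilibrium path). *)

(* Defs.v *)
From HB Require Import structures.
From mathcomp Require Import all_boot all_order all_algebra.
From mathcomp Require Import reals.
Set Implicit Arguments. Unset Strict Implicit. Unset Printing Implicit Defensive.
Import Order.TTheory GRing.Theory Num.Theory.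
Local Open Scope ring_scope.

(* Values in {-1,+1}: Mn = -1, Pl = +1. *)
Inductive pm := Mn | Pl.
Definition pm_to_bool (p : pm) : bool := if p is Pl then true else false.
Definition bool_to_pm (b : bool) : pm := if b then Pl else Mn.
Lemma pm_to_boolK : cancel pm_to_bool bool_to_pm. Proof. by case. Qed.
HB.instance Definition _ := Equality.copy pm (can_type pm_to_boolK).
HB.instance Definition _ := Choice.copy pm (can_type pm_to_boolK).
HB.instance Definition _ := Countable.copy pm (can_type pm_to_boolK).
HB.instance Definition _ := Finite.copy pm (can_type pm_to_boolK).

(* Stage-2 actions in {-1,0,+1}: Am = -1, A0 = 0, Ap = +1. *)
Inductive act := Am | A0 | Ap.
Definition act_to_opt (a : act) : option bool :=
  match a with Am => Some false | A0 => None | Ap => Some true end.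
Definition opt_to_act (o : option bool) : act :=
  match o with Some false => Am | None => A0 | Some true => Ap end.
Lemma act_to_optK : cancel act_to_opt opt_to_act. Proof. by case. Qed.
HB.instance Definition _ := Equality.copy act (can_type act_to_optK).
HB.instance Definition _ := Choice.copy act (can_type act_to_optK).
HB.instance Definition _ := Countable.copy act (can_type act_to_optK).
HB.instance Definition _ := Finite.copy act (can_type act_to_optK).

Definition act_of_pm (p : pm) : act := if p is Pl then Ap else Am.

Section Game.
Variable R : realType.

Definition is_dist (T : finType) (p : T -> R) : Prop :=
  (forall t, 0 <= p t) /\ \sum_(t : T) p t = 1.

Definition prior (x1A x1B : pm) : R := 2^-1 * 2^-1.

Definition rA1 (u1B : pm) : R := if u1B == Mn then -1 else 0.
Definition rA2 (x2 : pm) (u2A : act) : R :=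
  if (u2A == act_of_pm x2) || (u2A == A0) then 1 else 0.
Definition rB1 (u1B : pm) : R := if u1B == Mn then 5^-1 else 0.
Definition rB2 (u2A u2B : act) : R := if u2A == u2B then -1 else 0.

Definition payA (x1A x1B u1B : pm) (u2A u2B : act) : R := rA1 u1B + rA2 x1B u2A.
Definition payB (x1A x1B u1B : pm) (u2A u2B : act) : R := rB1 u1B + rB2 u2A u2B.

(* Behavioral strategy profile:
   sB1 x1B u1B   = prob. Bob plays U1B = u1B at stage 1 given H1B = x1B;
   sA2 x1A u1B a = prob. Alice plays U2A = a given H2A = (x1A, u1B);
   sB2 x1B u1B b = prob. Bob plays U2B = b given H2B = (x1B, u1B).
   (Alice has no move at stage 1.) *)
Record profile := Profile {
  sB1 : pm -> pm -> R;
  sA2 : pm -> pm -> act -> R;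
  sB2 : pm -> pm -> act -> R }.

Definition valid_profile (g : profile) : Prop :=
  (forall x1B, is_dist (sB1 g x1B)) /\
  (forall x1A u1B, is_dist (sA2 g x1A u1B)) /\
  (forall x1B u1B, is_dist (sB2 g x1B u1B)).

(* A node of an information set is a complete history; inside
   a given information set the known components are fixed, so the belief is a
   distribution over the remaining (unknown) component:
   muB1 x1B x1A     : Bob's stage-1 info set H1B = x1B, nodes (x1A, x1B);
   muA2 x1A u1B x1B : Alice's stage-2 info set (x1A,u1B), nodes (x1A,x1B,u1B);
   muB2 x1B u1B x1A : Bob's stage-2 info set (x1B,u1B), nodes (x1A,x1B,u1B). *)
Record beliefs := Beliefs {
  muB1 : pm -> pm -> R;
  muA2 : pm -> pm -> pm -> R;
  muB2 : pm -> pm -> pm -> R }.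

Definition valid_beliefs (mu : beliefs) : Prop :=
  (forall x1B, is_dist (muB1 mu x1B)) /\
  (forall x1A u1B, is_dist (muA2 mu x1A u1B)) /\
  (forall x1B u1B, is_dist (muB2 mu x1B u1B)).

Definition cont2A (x1A x1B u1B : pm) (pA pB : act -> R) : R :=
  \sum_(a : act) \sum_(b : act) pA a * pB b * payA x1A x1B u1B a b.
Definition cont2B (x1A x1B u1B : pm) (pA pB : act -> R) : R :=
  \sum_(a : act) \sum_(b : act) pA a * pB b * payB x1A x1B u1B a b.

Definition expA (g : profile) : R :=
  \sum_(x1A : pm) \sum_(x1B : pm) prior x1A x1B *
    \sum_(u : pm) sB1 g x1B u * cont2A x1A x1B u (sA2 g x1A u) (sB2 g x1B u).
Definition expB (g : profile) : R :=
  \sum_(x1A : pm) \sum_(x1B : pm) prior x1A x1B *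
    \sum_(u : pm) sB1 g x1B u * cont2B x1A x1B u (sA2 g x1A u) (sB2 g x1B u).

Definition payoff_profile (g : profile) : R * R := (expA g, expB g).

Definition seqrat_A2 (g : profile) (mu : beliefs) : Prop :=
  forall x1A u1B (d : act -> R), is_dist d ->
    \sum_(x1B : pm) muA2 mu x1A u1B x1B * cont2A x1A x1B u1B d (sB2 g x1B u1B)
    <= \sum_(x1B : pm) muA2 mu x1A u1B x1B *
         cont2A x1A x1B u1B (sA2 g x1A u1B) (sB2 g x1B u1B).

Definition seqrat_B2 (g : profile) (mu : beliefs) : Prop :=
  forall x1B u1B (d : act -> R), is_dist d ->
    \sum_(x1A : pm) muB2 mu x1B u1B x1A * cont2B x1A x1B u1B (sA2 g x1A u1B) d
    <= \sum_(x1A : pm) muB2 mu x1B u1B x1A *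
         cont2B x1A x1B u1B (sA2 g x1A u1B) (sB2 g x1B u1B).

(* at his stage-1 information set, Bob's continuation strategy consists of his
   stage-1 mixed action d1 and his stage-2 behavior h at the succeeding
   information sets (x1B, u1B) *)
Definition seqrat_B1 (g : profile) (mu : beliefs) : Prop :=
  forall x1B (d1 : pm -> R) (h : pm -> act -> R),
    is_dist d1 -> (forall u, is_dist (h u)) ->
    \sum_(x1A : pm) muB1 mu x1B x1A *
      \sum_(u : pm) d1 u * cont2B x1A x1B u (sA2 g x1A u) (h u)
    <= \sum_(x1A : pm) muB1 mu x1B x1A *
      \sum_(u : pm) sB1 g x1B u * cont2B x1A x1B u (sA2 g x1A u) (sB2 g x1B u).

Definition reach2 (g : profile) (x1A x1B u1B : pm) : R :=
  prior x1A x1B * sB1 g x1B u1B.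

Definition bayes (g : profile) (mu : beliefs) : Prop :=
  (forall x1B x1A, 0 < \sum_(y : pm) prior y x1B ->
     muB1 mu x1B x1A = prior x1A x1B / \sum_(y : pm) prior y x1B) /\
  (forall x1A u1B x1B, 0 < \sum_(y : pm) reach2 g x1A y u1B ->
     muA2 mu x1A u1B x1B = reach2 g x1A x1B u1B / \sum_(y : pm) reach2 g x1A y u1B) /\
  (forall x1B u1B x1A, 0 < \sum_(y : pm) reach2 g y x1B u1B ->
     muB2 mu x1B u1B x1A = reach2 g x1A x1B u1B / \sum_(y : pm) reach2 g y x1B u1B).

Definition wPBE (g : profile) (mu : beliefs) : Prop :=
  [/\ valid_profile g, valid_beliefs mu,
      seqrat_A2 g mu /\ seqrat_B2 g mu /\ seqrat_B1 g mu & bayes g mu].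

(* K-based: K_1^A = X1A (Alice has no stage-1 move), K_2^A = U1B, K_t^B = H_t^B.
   Only restriction: Alice's stage-2 mixed action depends only on U1B. *)
Definition K_based (g : profile) : Prop :=
  forall x1A x1A' u1B (a : act), sA2 g x1A u1B a = sA2 g x1A' u1B a.

Definition wPBE_payoffs (v : R * R) : Prop :=
  exists g mu, wPBE g mu /\ payoff_profile g = v.
Definition K_wPBE_payoffs (v : R * R) : Prop :=
  exists g mu, wPBE g mu /\ K_based g /\ payoff_profile g = v.

End Game.

Definition proper_subset (T : Type) (A B : T -> Prop) : Prop :=
  (forall v, A v -> B v) /\ exists v, B v /\ ~ A v.

(* Main.v *)
Require Import Defs.
From mathcomp Require Import all_boot all_order all_algebra.
From mathcomp Require Import reals.
From mathcomp Require Import ring lra.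
Import Order.TTheory GRing.Theory Num.Theory.
Local Open Scope ring_scope.

Lemma sum_pm (R : realType) (F : pm -> R) : \sum_(t : pm) F t = F Mn + F Pl.
Proof.
rewrite (perm_big [:: Mn; Pl]) /=; last first.
  apply: uniq_perm; first exact: index_enum_uniq; first by [].
  by case; rewrite mem_index_enum.
by rewrite !big_cons big_nil addr0.
Qed.

Lemma sum_act (R : realType) (F : act -> R) : \sum_(t : act) F t = F Am + F A0 + F Ap.
Proof.
rewrite (perm_big [:: Am; A0; Ap]) /=; last first.
  apply: uniq_perm; first exact: index_enum_uniq; first by [].
  by case; rewrite mem_index_enum.
by rewrite !big_cons big_nil addr0 addrA.
Qed.

Definition dlt (R : realType) (T : eqType) (t0 : T) : T -> R :=
  fun t => if t == t0 then 1 else 0.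

Lemma double_le (R : realType) (pA pB : act -> R) (f : act -> act -> R) M :
  is_dist pA -> is_dist pB -> (forall a b, f a b <= M) ->
  \sum_(a : act) \sum_(b : act) pA a * pB b * f a b <= M.
Proof.
move=> [pA0 pA1] [pB0 pB1] hf.
apply: (@le_trans _ _ (\sum_(a : act) \sum_(b : act) pA a * pB b * M)).
  apply: ler_sum => a _; apply: ler_sum => b _.
  by apply: ler_wpM2l; [apply: mulr_ge0|].
move: pA1 pB1; rewrite !sum_act => hA hB.
set sA := pA Am + _ + _ in hA; set sB := pB Am + _ + _ in hB.
have -> : pA Am * pB Am * M + pA Am * pB A0 * M + pA Am * pB Ap * M +
  (pA A0 * pB Am * M + pA A0 * pB A0 * M + pA A0 * pB Ap * M) +
  (pA Ap * pB Am * M + pA Ap * pB A0 * M + pA Ap * pB Ap * M) = sA * sB * M.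
  rewrite /sA /sB; ring.
by rewrite hA hB !mul1r.
Qed.

Lemma contA_le (R : realType) x1A x1B u (pA pB : act -> R) :
  is_dist pA -> is_dist pB -> cont2A x1A x1B u pA pB <= rA1 R u + 1.
Proof.
move=> hA hB; apply: double_le => // a b.
rewrite /payA /rA2 lerD2l; by case: ifP.
Qed.

Lemma contB_le (R : realType) x1A x1B u (pA pB : act -> R) :
  is_dist pA -> is_dist pB -> cont2B x1A x1B u pA pB <= rB1 R u.
Proof.
move=> hA hB; apply: double_le => // a b.
rewrite /payB /rB2; case: ifP => _; lra.
Qed.

Lemma contA_eq (R : realType) x1A x1B u (pA pB : act -> R) :
  is_dist pB -> cont2A x1A x1B u pA pB = \sum_(a : act) pA a * (rA1 R u + rA2 R x1B a).
Proof.
move=> [_ pB1]; apply: eq_bigr => a _.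
rewrite /payA; under eq_bigr do rewrite mulrAC.
by rewrite -mulr_sumr pB1 mulr1.
Qed.

Section W.
Variable R : realType.

Definition gW : profile R := Profile
  (fun (x u : pm) => if u == Pl then 1 else 0 : R)
  (fun (x1A u : pm) (a : act) => if u == Pl then (if a == A0 then 1 else 0)
     else if a == A0 then 3^-1 else if a == act_of_pm x1A then 2 * 3^-1 else 0)
  (fun (x1B u : pm) (b : act) => if b == Ap then 1 else 0).

Definition muW : beliefs R := Beliefs
  (fun (_ _ : pm) => 2^-1)
  (fun (x1A u x1B : pm) => if u == Pl then 2^-1 else if x1B == x1A then 1 else 0)
  (fun (_ _ _ : pm) => 2^-1).

Lemma gW_valid : valid_profile gW.
Proof.
split; [|split].
- move=> x; split; first by move=> t; case: t => /=; lra.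
  by rewrite sum_pm /=; lra.
- move=> x u; split; first by move=> t; case: x; case: u; case: t => /=; lra.
  by rewrite sum_act; case: x; case: u => /=; lra.
- move=> x u; split; first by move=> t; case: t => /=; lra.
  by rewrite sum_act /=; lra.
Qed.

Lemma muW_valid : valid_beliefs muW.
Proof.
split; [|split].
- move=> x; split; first by move=> t /=; lra.
  by rewrite sum_pm /=; lra.
- move=> x u; split; first by move=> t; case: x; case: u; case: t => /=; lra.
  by rewrite sum_pm; case: x; case: u => /=; lra.
- move=> x u; split; first by move=> t /=; lra.
  by rewrite sum_pm /=; lra.
Qed.


Lemma gW_A2 : seqrat_A2 gW muW.
Proof.
move=> x1A u d [d0 d1]; move: d1.
rewrite /cont2A /payA /rA1 /rA2 !sum_pm !sum_act => d1.
have:=d0 Am; have:=d0 A0; have:= d0 Ap.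
case: x1A; case: u => /=; lra.
Qed.

Lemma gW_B2 : seqrat_B2 gW muW.
Proof.
move=> x1B u d [d0 d1]; move: d1.
rewrite /cont2B /payB /rB1 /rB2 !sum_pm !sum_act => d1.
have:=d0 Am; have:=d0 A0; have:= d0 Ap.
case: x1B; case: u => /=; lra.
Qed.

Lemma gW_B1 : seqrat_B1 gW muW.
Proof.
move=> x1B d1 h [e0 e1] hh.
apply: (@le_trans _ _ 0).
  have H1 : cont2B Mn x1B Mn (sA2 gW Mn Mn) (h Mn) + cont2B Pl x1B Mn (sA2 gW Pl Mn) (h Mn) <= 0.
    case: (hh Mn) => h0; rewrite /cont2B /payB /rB1 /rB2 !sum_act /= => h1.
    have:=h0 Am; have:=h0 A0; have:= h0 Ap; lra.
  have H2 : cont2B Mn x1B Pl (sA2 gW Mn Pl) (h Pl) + cont2B Pl x1B Pl (sA2 gW Pl Pl) (h Pl) <= 0.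
    case: (hh Pl) => h0; rewrite /cont2B /payB /rB1 /rB2 !sum_act /= => h1.
    have:=h0 Am; have:=h0 A0; have:= h0 Ap; lra.
  rewrite !sum_pm.
  move: H1 H2 (e0 Mn) (e0 Pl).
  generalize (cont2B Mn x1B Mn (sA2 gW Mn Mn) (h Mn)) (cont2B Pl x1B Mn (sA2 gW Pl Mn) (h Mn))
    (cont2B Mn x1B Pl (sA2 gW Mn Pl) (h Pl)) (cont2B Pl x1B Pl (sA2 gW Pl Pl) (h Pl)).
  move=> a b c e /=; nra.
rewrite /cont2B /payB /rB1 /rB2 !sum_pm !sum_act /=; lra.
Qed.

Lemma gW_bayes : bayes gW muW.
Proof.
split; [|split].
- move=> x1B x1A _; rewrite /prior sum_pm /=.
  have -> : (2^-1 * 2^-1 + 2^-1 * 2^-1 : R) = 2^-1 by lra.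
  by rewrite mulfK // invr_eq0 pnatr_eq0.
- move=> x1A u x1B; rewrite /reach2 /prior sum_pm; case: u => /=.
    rewrite !mulr0 addr0; lra.
  rewrite !mulr1 => _.
  have -> : (2^-1 * 2^-1 + 2^-1 * 2^-1 : R) = 2^-1 by lra.
  by rewrite mulfK // invr_eq0 pnatr_eq0.
- move=> x1B u x1A; rewrite /reach2 /prior sum_pm; case: u => /=.
    rewrite !mulr0 addr0; lra.
  rewrite !mulr1 => _.
  have -> : (2^-1 * 2^-1 + 2^-1 * 2^-1 : R) = 2^-1 by lra.
  by rewrite mulfK // invr_eq0 pnatr_eq0.
Qed.

Lemma gW_wPBE : wPBE gW muW.
Proof.
split; [exact: gW_valid | exact: muW_valid | | exact: gW_bayes].
split; [exact: gW_A2 | split; [exact: gW_B2 | exact: gW_B1]].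
Qed.

Lemma gW_pay : payoff_profile gW = (1, 0).
Proof.
rewrite /payoff_profile /expA /expB /cont2A /cont2B /payA /payB /rA1 /rA2 /rB1 /rB2 /prior.
rewrite !sum_pm !sum_act /=; congr pair; lra.
Qed.

End W.

Arguments dlt R {T}.

Lemma dlt_dist (R : realType) (T : finType) (t0 : T) : is_dist (dlt R t0).
Proof.
split; first by move=> t; rewrite /dlt; case: ifP => _; lra.
by rewrite /dlt -big_mkcond /= big_pred1_eq.
Qed.

Theorem proposition1 (R : realType) :
  proper_subset (@K_wPBE_payoffs R) (@wPBE_payoffs R).
Proof.
split.
  by move=> v [g [mu [h [_ hv]]]]; exists g, mu.
exists (1, 0); split.
  by exists (gW R), (muW R); split; [exact: gW_wPBE | exact: gW_pay].
move=> [g [mu [[vg vm [sA2r [sB2r sB1r]] bay] [K hv]]]].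
case: hv => hA _.
have [vB1 [vA2 vB2]] := vg.
have [vmB1 [vmA2 vmB2]] := vm.
have Hle : expA g <= \sum_(x1A : pm) \sum_(x1B : pm) prior R x1A x1B *
      \sum_(u : pm) sB1 g x1B u * (rA1 R u + 1).
  apply: ler_sum => x1A _; apply: ler_sum => x1B _; apply: ler_wpM2l.
    by rewrite /prior; lra.
  apply: ler_sum => u _; apply: ler_wpM2l; first by case: (vB1 x1B) => ->.
  by apply: contA_le; [exact: vA2 | exact: vB2].
have [s0 s1] := vB1 Pl; have [t0 t1] := vB1 Mn.
move: s1 t1; rewrite !sum_pm => s1 t1.
have := s0 Mn; have := s0 Pl; have := t0 Mn; have := t0 Pl.
move: Hle; rewrite hA !sum_pm /prior /rA1 /= => Hle h1 h2 h3 h4.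
have sPlMn : sB1 g Pl Mn = 0 by lra.
have sPlPl : sB1 g Pl Pl = 1 by lra.
have hq := sA2r Pl Mn (dlt R A0) (dlt_dist _ _ _).
rewrite !sum_pm !(contA_eq _ _ _ _ _ _ (vB2 _ _)) !sum_act /dlt /rA1 /rA2 /= in hq.
have [q0 q1] := vA2 Pl Mn; move: q1; rewrite sum_act => q1.
have [m0 m1] := vmA2 Pl Mn; move: m1; rewrite sum_pm => m1.
have := q0 Am; have := q0 A0; have := q0 Ap; have := m0 Pl; have := m0 Mn.
move: hq q1 m1.
set qm := sA2 g Pl Mn Am; set qz := sA2 g Pl Mn A0; set qp := sA2 g Pl Mn Ap.
set mp := muA2 mu Pl Mn Pl; set mm := muA2 mu Pl Mn Mn.
move=> hq q1 m1 hmm hmp hqp hqz hqm.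
have E1 : mp * qm = 0 by nra.
have E2 : mm * qp = 0 by nra.
have [b0 hb0] : exists b0, sA2 g Pl Mn b0 = 0 /\ (b0 = Am \/ b0 = Ap).
  case: (mp =P 0) => [mp0|mpn0].
    exists Ap; split; last by right.
    have mm1 : mm = 1 by lra.
    by move: E2; rewrite mm1 mul1r.
  exists Am; split; last by left.
  by move/eqP: E1; rewrite mulf_eq0 => /orP [/eqP //|/eqP].
have C : forall x1A, cont2B x1A Pl Mn (sA2 g x1A Mn) (dlt R b0) = 5^-1.
  move=> x1A; rewrite /cont2B !sum_act !(K x1A Pl Mn) /payB /rB1 /rB2 /dlt.
  case: hb0 => hz [] hb; rewrite hb in hz *; move: hz; rewrite -/qm -/qz -/qp /= => hz; lra.
have hb := sB1r Pl (dlt R Mn) (fun _ => dlt R b0) (dlt_dist _ _ _) (fun _ => dlt_dist _ _ _).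
have RB : forall x1A, cont2B x1A Pl Pl (sA2 g x1A Pl) (sB2 g Pl Pl) <= 0.
  move=> x1A; apply: (le_trans (contB_le _ _ _ _ _ _ (vA2 _ _) (vB2 _ _))).
  by rewrite /rB1 /=.
move: hb; rewrite !sum_pm !C sPlMn sPlPl /dlt /=.
have := RB Mn; have := RB Pl.
have [n0 n1] := vmB1 Pl; move: n1; rewrite sum_pm => n1.
have := n0 Mn; have := n0 Pl.
move: n1.
generalize (cont2B Mn Pl Pl (sA2 g Mn Pl) (sB2 g Pl Pl)) (cont2B Pl Pl Pl (sA2 g Pl Pl) (sB2 g Pl Pl)).
move=> a b n1 hn1 hn2 ha hb.
move=> H; nra.
Qed.
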